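(* Let $r\ge2$ and $\Lambda=\Phi^+_{A_{r+1}}\setminus\{\alpha_{r+1}\}$, where $\alpha_{r+1}=\varepsilon_{r+1}-\varepsilon_{r+2}$. Then \[K_{B_r}(\tilde\alpha_{B_r})=K_\Lambda(2\tilde\alpha_{A_{r+1}}-\alpha_1-\alpha_{r+1}),\] where $\tilde\alpha_{B_r}=\varepsilon_1+\varepsilon_2\in\mathbb{R}^r$ and $2\tilde\alpha_{A_{r+1}}-\alpha_1-\alpha_{r+1}=\alpha_1+2\alpha_2+\cdots+2\alpha_r+\alpha_{r+1}=\varepsilon_1+\varepsilon_2-\varepsilon_{r+1}-\varepsilon_{r+2}\in\mathbb{R}^{r+2}$.
   Context: $\Phi^+_{A_{r+1}}=\{\varepsilon_i-\varepsilon_j:1\le i<j\le r+2\}\subset\mathbb{R}^{r+2}$, $\alpha_i=\varepsilon_i-\varepsilon_{i+1}$; for $\Lambda\subseteq\Phi^+_{A_{r+1}}$, $K_\Lambda(\mu)$ is the number of finite multisets of elements of $\Lambda$ summing to $\mu$. $\Phi^+_{B_r}=\{\varepsilon_i\pm\varepsilon_j:1\le i<j\le r\}\cup\{\varepsilon_i:1\le i\le r\}\subset\mathbb{R}^r$ and $K_{B_r}(\mu)$ is the number of finite multisets of elements of $\Phi^+_{B_r}$ summing to $\mu$. *)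

(* Defs.v *)
From HB Require Import structures.
From mathcomp Require Import all_boot all_order all_algebra.
Set Implicit Arguments. Unset Strict Implicit. Unset Printing Implicit Defensive.
Import Order.TTheory GRing.Theory Num.Theory.
Local Open Scope ring_scope.

Definition evec (n k : nat) : 'rV[int]_n := \row_(i < n) ((i == k :> nat)%:R : int).

(* Kostant partition function, generic form: the roots are labelled by a
   finite type T via [root : T -> 'rV[int]_n] (injective in our uses), so a
   finite multiset of roots is a multiplicity function m : T -> nat.
   [kostant root mu N] means: the set of multisets summing to mu is finite
   and has exactly N elements. *)
Definition kostant (T : finType) (n : nat) (root : T -> 'rV[int]_n)
    (mu : 'rV[int]_n) (N : nat) : Prop :=
  exists s : seq {ffun T -> nat},
    [/\ uniq s, size s = N &
        forall m : {ffun T -> nat}, m \in s <-> \sum_(t : T) root t *+ m t = mu].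

(* Lambda = Phi^+_{A_{r+1}} \ {alpha_{r+1}}, roots e_i - e_j (0-indexed i<j
   in 0..r+1), excluding (i,j) = (r, r+1), i.e. eps_{r+1}-eps_{r+2}. *)
Definition labA (r : nat) : pred ('I_(r.+2) * 'I_(r.+2)) :=
  fun p => (p.1 < p.2)%N && ~~ ((nat_of_ord p.1 == r)%N && (nat_of_ord p.2 == r.+1)%N).
Definition LabA (r : nat) := {p : 'I_(r.+2) * 'I_(r.+2) | @labA r p}.
Definition rootA (r : nat) (x : LabA r) : 'rV[int]_(r.+2) :=
  evec r.+2 (val x).1 - evec r.+2 (val x).2.

Definition labB (r : nat) : pred ('I_r * 'I_r * bool) := fun p => (p.1.1 < p.1.2)%N.
Definition LabB (r : nat) := ({p : 'I_r * 'I_r * bool | @labB r p} + 'I_r)%type.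
Definition rootB (r : nat) (x : LabB r) : 'rV[int]_r :=
  match x with
  | inl p => evec r (val p).1.1 +
             (if (val p).2 then evec r (val p).1.2 else - evec r (val p).1.2)
  | inr i => evec r i
  end.

(* Main.v *)
Require Import Defs.
From HB Require Import structures.
From mathcomp Require Import all_boot all_order all_algebra.
From mathcomp Require Import zify ring.

Lemma kostant_transfer (T1 T2 : finType) n1 n2 (r1 : T1 -> 'rV[int]_n1)
  (r2 : T2 -> 'rV[int]_n2) mu1 mu2 N
  (f : {ffun T1 -> nat} -> {ffun T2 -> nat}) (g : {ffun T2 -> nat} -> {ffun T1 -> nat}) :
  (forall m : {ffun T1 -> nat}, (\sum_t r1 t *+ m t = mu1)%R -> (\sum_t r2 t *+ f m t = mu2)%R) ->
  (forall m : {ffun T2 -> nat}, (\sum_t r2 t *+ m t = mu2)%R -> (\sum_t r1 t *+ g m t = mu1)%R) ->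
  (forall m : {ffun T1 -> nat}, (\sum_t r1 t *+ m t = mu1)%R -> g (f m) = m) ->
  (forall m : {ffun T2 -> nat}, (\sum_t r2 t *+ m t = mu2)%R -> f (g m) = m) ->
  kostant r1 mu1 N -> kostant r2 mu2 N.
Proof.
move=> fS gS gf fg [s [us ss hs]].
exists (map f s); split.
- rewrite map_inj_in_uniq // => x y /hs xs /hs ys e.
  by rewrite -(gf _ xs) e gf.
- by rewrite size_map.
- move=> m; split.
  + by case/mapP => x /hs xs ->; apply: fS.
  + move=> ms; apply/mapP; exists (g m); last by rewrite fg.
    by apply/hs; apply: gS.
Qed.

Lemma kostant_bounded (T : finType) n (r : T -> 'rV[int]_n) mu K :
  (forall m : {ffun T -> nat}, (\sum_t r t *+ m t = mu)%R -> forall t, m t <= K) ->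
  exists N, kostant r mu N.
Proof.
move=> hb.
pose cv (g : {ffun T -> 'I_K.+1}) : {ffun T -> nat} := [ffun t => nat_of_ord (g t)].
pose s := [seq cv g | g <- enum {ffun T -> 'I_K.+1} & (\sum_t r t *+ cv g t == mu)%R].
exists (size s); exists s; split => //.
- rewrite map_inj_uniq; first by rewrite filter_uniq // enum_uniq.
  move=> g1 g2 e.
  apply/ffunP => t; apply/val_inj; have := congr1 (fun h : {ffun T -> nat} => h t) e.
  by rewrite /cv !ffunE.
- move=> m; split.
  + by case/mapP => g; rewrite mem_filter => /andP[/eqP h _] ->.
  + move=> ms; apply/mapP; exists [ffun t => inord (m t)].
      rewrite mem_filter mem_enum andbT.
      suff -> : cv [ffun t => inord (m t)] = m by apply/eqP.
      by apply/ffunP => t; rewrite /cv !ffunE inordK // ltnS hb.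
    by apply/ffunP => t; rewrite /cv !ffunE inordK // ltnS hb.
Qed.

Lemma sum_delta lo hi b (G : nat -> nat) : lo <= hi ->
  \sum_(lo <= i < hi) (i == b) * G i = (lo <= b < hi) * G b.
Proof.
elim: hi => [|hi IH] Hl.
  by rewrite big_geq //; case: (lo <= b); rewrite ?ltn0 ?andbF.
rewrite leq_eqVlt in Hl; case/orP: Hl => [/eqP Heq|Hlo].
  by rewrite Heq big_geq //; case: (leqP b hi) => h //=; rewrite ltnS leqNgt h.
rewrite ltnS in Hlo.
rewrite big_nat_recr //= IH //.
case: (ltngtP b hi) => [bh|hb|->] /=.
- by rewrite mul0n addn0 andbT ltnS (ltnW bh) andbT.
- by rewrite andbF !mul0n ltnS (leqNgt b hi) hb andbF.
- by rewrite andbF mul0n add0n mul1n ltnS leqnn Hlo mul1n.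
Qed.

Lemma sum_ind lo hi b : lo <= hi -> \sum_(lo <= i < hi) (i == b : nat) = (lo <= b < hi).
Proof.
move=> h; rewrite -[RHS]muln1 -(@sum_delta lo hi b (fun _ => 1) h).
by apply: eq_bigr => i _; rewrite muln1.
Qed.

Lemma sum0N lo hi (F : nat -> nat) : \sum_(lo <= i < hi) F i = 0 ->
  forall i, lo <= i < hi -> F i = 0.
Proof.
move=> h i /andP[h1 h2]; apply/eqP; rewrite -leqn0 -h.
rewrite (big_cat_nat (n:=i)) ?(ltnW h2) //=.
rewrite (big_ltn (m:=i)) //=.
by rewrite addnCA leq_addr.
Qed.

Lemma sum1N N (F : nat -> nat) : \sum_(0 <= i < N) F i = 1 ->
  exists2 a, a < N & forall i, i < N -> F i = (i == a).
Proof.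
elim: N => [|N IH]; first by rewrite big_geq.
rewrite big_nat_recr //=.
case E: (F N) => [|[|k]] h.
- rewrite addn0 in h; case: (IH h) => a aN ha; exists a; first exact: ltnW.
  move=> i; rewrite ltnS leq_eqVlt => /orP[/eqP ->|/ha //].
  by rewrite E eq_sym (ltn_eqF aN).
- have h0 : \sum_(0 <= i < N) F i = 0 by lia.
  exists N => // i; rewrite ltnS leq_eqVlt => /orP[/eqP ->|iN]; first by rewrite E eqxx.
  by rewrite (@sum0N 0 N F h0 i iN) (ltn_eqF iN).
- lia.
Qed.

Lemma seqX N (s : nat -> nat) :
  \sum_(0 <= i < N) (0 < s i) * (\sum_(0 <= k < i) s k == 0) = (0 < \sum_(0 <= k < N) s k).
Proof.
elim: N => [|N IH]; first by rewrite !big_geq.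
rewrite !big_nat_recr //= IH.
by case: (\sum_(0 <= k < N) s k) => [|x]; case: (s N) => [|y] //=.
Qed.

Lemma seqY N (s : nat -> nat) : \sum_(0 <= k < N) s k <= 2 ->
  \sum_(0 <= i < N) (0 < s i) * (\sum_(0 <= k < i.+1) s k == 2) = (\sum_(0 <= k < N) s k == 2).
Proof.
elim: N => [|N IH]; first by rewrite !big_geq.
rewrite !big_nat_recr //= => h.
rewrite IH; last by lia.
move: h; case: (\sum_(0 <= k < N) s k) => [|[|[|x]]]; case: (s N) => [|[|[|y]]] //=.
Qed.

Lemma leq_termN lo hi i (F : nat -> nat) : lo <= i < hi -> F i <= \sum_(lo <= k < hi) F k.
Proof.
move=> /andP[h1 h2].
rewrite (big_cat_nat (n:=i)) ?(ltnW h2) //= (big_ltn (m:=i)) //=.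
by rewrite addnCA leq_addr.
Qed.

Lemma sum_deltaR lo hi b (G : nat -> nat) : lo <= hi ->
  \sum_(lo <= i < hi) G i * (i == b) = (lo <= b < hi) * G b.
Proof.
move=> h; rewrite -(@sum_delta lo hi b G h); apply: eq_bigr => i _; exact: mulnC.
Qed.

Import GRing.Theory.
Set Implicit Arguments. Unset Strict Implicit.

Lemma sum_sig (R : nmodType) (T : finType) (P : pred T) (F : T -> R) :
  (\sum_(t : {x | P x}) F (val t) = \sum_(x | P x) F x)%R.
Proof.
rewrite (reindex_omap (val : {x | P x} -> T) insub); last first.
  by move=> i Pi; rewrite insubT.
by apply: eq_bigl=> -[i iA]/=; rewrite insubT /=; apply/esym/andP; split => //; apply/eqP.
Qed.

Definition aA r (m : {ffun LabA r -> nat}) (i j : nat) : nat :=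
  if (insub i : option 'I_r.+2) is Some i' then
  if (insub j : option 'I_r.+2) is Some j' then
  if (insub (i', j') : option (LabA r)) is Some t then m t else 0 else 0 else 0.

Lemma aA_val r (m : {ffun LabA r -> nat}) (t : LabA r) : aA m (val t).1 (val t).2 = m t.
Proof. by rewrite /aA !valK /= -surjective_pairing valK. Qed.

Lemma aA_ord r (m : {ffun LabA r -> nat}) (i j : 'I_r.+2) : ~~ labA (i, j) -> aA m i j = 0.
Proof. by move=> h; rewrite /aA !valK insubF //; apply/negbTE. Qed.

Lemma delta_ord n (c : 'I_n) (F : 'I_n -> nat) :
  (\sum_(j < n) ((c == j :> nat)%:R *+ F j : int) = (F c)%:R)%R.
Proof.
rewrite (bigD1 c) //= big1 ?addr0 ?eqxx // => j /negbTE jc.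
by rewrite eq_sym -(inj_eq val_inj) in jc; rewrite /= jc mul0rn.
Qed.

Lemma dd1 n (c : 'I_n) (F : 'I_n -> 'I_n -> nat) :
  (\sum_(i < n) \sum_(j < n) ((c == i :> nat)%:R *+ F i j : int))%R = Posz (\sum_(j < n) F c j).
Proof.
rewrite (bigD1 c) //= [X in (_ + X)%R]big1 ?addr0.
  by rewrite eqxx -natz natr_sum.
move=> i /negbTE ic; rewrite eq_sym -(inj_eq val_inj) in ic.
by apply: big1 => j _; rewrite /= ic mul0rn.
Qed.

Lemma dd2 n (c : 'I_n) (F : 'I_n -> 'I_n -> nat) :
  (\sum_(i < n) \sum_(j < n) ((c == j :> nat)%:R *+ F i j : int))%R = Posz (\sum_(i < n) F i c).
Proof.
rewrite exchange_big /=; exact: (dd1 c (fun i j => F j i)).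
Qed.

Lemma coordA r (m : {ffun LabA r -> nat}) (c : 'I_r.+2) :
  (\sum_t rootA t *+ m t)%R ord0 c =
  ((\sum_(j < r.+2) aA m c j)%:Z - (\sum_(i < r.+2) aA m i c)%:Z)%R.
Proof.
rewrite summxE.
under eq_bigr => t _ do rewrite mulmxnE !mxE -(aA_val m t).
rewrite (sum_sig _ (fun p : 'I_r.+2 * 'I_r.+2 =>
   (((c == p.1 :> nat)%:R - (c == p.2 :> nat)%:R) *+ aA m p.1 p.2 : int)%R)).
rewrite big_mkcond /=.
rewrite (eq_bigr (fun p : 'I_r.+2 * 'I_r.+2 =>
   (((c == p.1 :> nat)%:R - (c == p.2 :> nat)%:R) *+ aA m p.1 p.2 : int)%R)); last first.
  by move=> [i j] _; case: ifP => // /negbT h; rewrite aA_ord.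
rewrite -(pair_bigA _ (fun i j : 'I_r.+2 =>
   (((c == i :> nat)%:R - (c == j :> nat)%:R) *+ aA m i j : int)%R)) /=.
rewrite (eq_bigr (fun i : 'I_r.+2 => (\sum_(j < r.+2) ((c==i :> nat)%:R *+ aA m i j : int))
   - \sum_(j < r.+2) ((c == j :> nat)%:R *+ aA m i j))%R); last first.
  by move=> i _; rewrite -sumrB; apply: eq_bigr => j _; rewrite mulrnBl.
rewrite sumrB exchange_big /=.
under eq_bigr => j _ do rewrite (delta_ord c (fun i => aA m i j)).
under [X in (_ - X)%R]eq_bigr => i _ do rewrite (delta_ord c (fun j => aA m i j)).
by rewrite -!natz !natr_sum.
Qed.

Definition bB r (m : {ffun LabB r -> nat}) (i j : nat) (b : bool) : nat :=
  if (insub i : option 'I_r) is Some i' then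
  if (insub j : option 'I_r) is Some j' then
  if (insub (i', j', b) : option {p : 'I_r * 'I_r * bool | @labB r p}) is Some t
  then m (inl t) else 0 else 0 else 0.

Definition sB r (m : {ffun LabB r -> nat}) (k : nat) : nat :=
  if (insub k : option 'I_r) is Some k' then m (inr k') else 0.

Lemma bB_val r (m : {ffun LabB r -> nat}) (t : {p : 'I_r * 'I_r * bool | @labB r p}) :
  bB m (val t).1.1 (val t).1.2 (val t).2 = m (inl t).
Proof. by rewrite /bB !valK /= -!surjective_pairing valK. Qed.

Lemma bB_ord r (m : {ffun LabB r -> nat}) (i j : 'I_r) b : ~~ labB (i, j, b) -> bB m i j b = 0.
Proof. by move=> h; rewrite /bB !valK insubF //; apply/negbTE. Qed.

Lemma sB_val r (m : {ffun LabB r -> nat}) (k : 'I_r) : sB m k = m (inr k).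
Proof. by rewrite /sB valK. Qed.

Lemma coordB r (m : {ffun LabB r -> nat}) (c : 'I_r) :
  (\sum_t rootB t *+ m t)%R ord0 c =
  ((\sum_(j < r) bB m c j false + \sum_(j < r) bB m c j true
    + \sum_(i < r) bB m i c true + sB m c)%:Z - (\sum_(i < r) bB m i c false)%:Z)%R.
Proof.
rewrite summxE big_sumType /=.
under [X in (_ + X)%R]eq_bigr => k _ do rewrite mulmxnE !mxE -sB_val.
rewrite (delta_ord c (fun k => sB m k)).
under eq_bigr => t _ do rewrite mulmxnE -(bB_val m t).
rewrite (sum_sig _ (fun p : 'I_r * 'I_r * bool =>
   ((evec r p.1.1 + (if p.2 then evec r p.1.2 else - evec r p.1.2)) ord0 c *+ bB m p.1.1 p.1.2 p.2 : int)%R)).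
rewrite big_mkcond /=.
rewrite (eq_bigr (fun p : 'I_r * 'I_r * bool =>
   ((evec r p.1.1 + (if p.2 then evec r p.1.2 else - evec r p.1.2)) ord0 c *+ bB m p.1.1 p.1.2 p.2 : int)%R)); last first.
  by move=> [[i j] b] _; case: ifP => // /negbT h; rewrite bB_ord.
rewrite -(pair_bigA _ (fun (q : 'I_r * 'I_r) (b : bool) =>
   ((evec r q.1 + (if b then evec r q.2 else - evec r q.2)) ord0 c *+ bB m q.1 q.2 b : int)%R)) /=.
under eq_bigr => q _ do rewrite big_bool /= !mxE.
rewrite -(pair_bigA _ (fun i j : 'I_r => (((c == i :> nat)%:R + (c == j :> nat)%:R) *+ bB m i j true
   + ((c == i :> nat)%:R - (c == j :> nat)%:R) *+ bB m i j false : int)%R)) /=.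
under eq_bigr => i _ do under eq_bigr => j _ do rewrite mulrnDl mulrnBl.
under eq_bigr => i _ do rewrite big_split /= big_split /= sumrB /=.
rewrite big_split /= big_split /= sumrB /=.
rewrite (dd1 c (fun i j => bB m i j true)) (dd2 c (fun i j => bB m i j true)).
rewrite (dd1 c (fun i j => bB m i j false)) (dd2 c (fun i j => bB m i j false)).
rewrite natz !PoszD; ring.
Qed.

Definition solAN r (m : {ffun LabA r -> nat}) := forall c, c < r.+2 ->
  \sum_(0 <= j < r.+2) aA m c j + (c == r) + (c == r.+1) =
  (c == 0) + (c == 1) + \sum_(0 <= i < r.+2) aA m i c.

Definition solBN r (m : {ffun LabB r -> nat}) := forall c, c < r ->
  \sum_(0 <= j < r) bB m c j false + \sum_(0 <= j < r) bB m c j true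
  + \sum_(0 <= i < r) bB m i c true + sB m c =
  (c == 0) + (c == 1) + \sum_(0 <= i < r) bB m i c false.

Lemma solA_iff r (m : {ffun LabA r -> nat}) :
  (\sum_t rootA t *+ m t)%R = (evec r.+2 0 + evec r.+2 1 - evec r.+2 r - evec r.+2 r.+1)%R
  <-> solAN m.
Proof.
split.
- move=> h c cn; have := congr1 (fun v : 'rV[int]_r.+2 => v ord0 (Ordinal cn)) h.
  rewrite coordA !mxE /= !big_mkord !natz.
  move: (c == 0) (c == 1) (c == r) (c == r.+1) => b0 b1 b2 b3.
  move: (\sum_(j < r.+2) aA m c j) (\sum_(i < r.+2) aA m i c) => A B. lia.
- move=> h; apply/rowP => c; rewrite coordA !mxE /= !natz.
  have := h c (ltn_ord c); rewrite !big_mkord.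
  move: (nat_of_ord c == 0) (nat_of_ord c == 1) (nat_of_ord c == r) (nat_of_ord c == r.+1) => b0 b1 b2 b3.
  move: (\sum_(j < r.+2) aA m c j) (\sum_(i < r.+2) aA m i c) => A B. lia.
Qed.

Lemma solB_iff r (m : {ffun LabB r -> nat}) :
  (\sum_t rootB t *+ m t)%R = (evec r 0 + evec r 1)%R <-> solBN m.
Proof.
split.
- move=> h c cn; have := congr1 (fun v : 'rV[int]_r => v ord0 (Ordinal cn)) h.
  rewrite coordB !mxE /= !big_mkord !natz.
  move: (c == 0) (c == 1) => b0 b1.
  move: (\sum_(j < r) bB m c j false) (\sum_(j < r) bB m c j true)
    (\sum_(i < r) bB m i c true) (\sum_(i < r) bB m i c false) (sB m c) => A B C D E. lia.
- move=> h; apply/rowP => c; rewrite coordB !mxE /= !natz.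
  have := h c (ltn_ord c); rewrite !big_mkord.
  move: (nat_of_ord c == 0) (nat_of_ord c == 1) => b0 b1.
  move: (\sum_(j < r) bB m c j false) (\sum_(j < r) bB m c j true)
    (\sum_(i < r) bB m i c true) (\sum_(i < r) bB m i c false) (sB m c) => A B C D E. lia.
Qed.

Lemma aA_zero r (m : {ffun LabA r -> nat}) i j :
  ~~ [&& i < j, j < r.+2 & ~~ ((i == r) && (j == r.+1))] -> aA m i j = 0.
Proof.
move=> h; rewrite /aA; case: insubP => [i' _ ei|//]; case: insubP => [j' jn ej|//].
rewrite insubF //; apply/negbTE; rewrite /labA /= ei ej; apply: contra h.
by case/andP => -> ->; rewrite -ej /= ltn_ord.
Qed.

Lemma boundA r (m : {ffun LabA r -> nat}) : solAN m -> forall t, m t <= (r.+2).*2.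
Proof.
move=> hs t; set n := r.+2.
pose a := aA m.
have key : \sum_(0 <= i < n) \sum_(0 <= j < n) (n - i) * a i j =
           \sum_(0 <= i < n) \sum_(0 <= j < n) (n - j) * a i j
         + \sum_(0 <= i < n) \sum_(0 <= j < n) (j - i) * a i j.
  rewrite -big_split /=; apply: eq_bigr => i _; rewrite -big_split /=.
  apply: eq_bigr => j _.
  case: (boolP [&& i < j, j < r.+2 & ~~ ((i == r) && (j == r.+1))]) => [/and3P[ij jn _]|h].
    rewrite -mulnDl; congr (_ * _); lia.
  by rewrite /a aA_zero // !muln0.
have S : \sum_(0 <= c < n) (n - c) * (\sum_(0 <= j < n) a c j + (c == r) + (c == r.+1)) =
         \sum_(0 <= c < n) (n - c) * ((c == 0) + (c == 1) + \sum_(0 <= i < n) a i c).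
  by apply: eq_big_nat => c /andP[_ cn]; rewrite hs.
have L : \sum_(0 <= c < n) (n - c) * (\sum_(0 <= j < n) a c j + (c == r) + (c == r.+1)) =
   \sum_(0 <= i < n) \sum_(0 <= j < n) (n - i) * a i j + (n - r) + (n - r.+1).
  under eq_bigr => c _ do rewrite !mulnDr.
  rewrite !big_split /= !sum_deltaR //.
  have -> : (0 <= r < n) = true by rewrite /n ltnS leqnSn.
  have -> : (0 <= r.+1 < n) = true by rewrite /n ltnS leqnn.
  rewrite !mul1n; congr (_ + _ + _); apply: eq_bigr => c _; by rewrite big_distrr.
have R : \sum_(0 <= c < n) (n - c) * ((c == 0) + (c == 1) + \sum_(0 <= i < n) a i c) =
   n + (n - 1) + \sum_(0 <= i < n) \sum_(0 <= j < n) (n - j) * a i j.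
  under eq_bigr => c _ do rewrite !mulnDr.
  rewrite !big_split /= !sum_deltaR // /n !mul1n subn0.
  congr (_ + _).
  rewrite exchange_big_nat /=.
  by apply: eq_bigr => c _; rewrite big_distrr.
have K3 : \sum_(0 <= i < n) \sum_(0 <= j < n) (j - i) * a i j <= n.*2.
  rewrite S in L; rewrite L key in R; rewrite /n in R *; lia.
rewrite -aA_val; set i := nat_of_ord (val t).1; set j := nat_of_ord (val t).2.
apply: leq_trans K3.
have ltj : j < n by rewrite /j ltn_ord.
have lti : i < n by rewrite /i ltn_ord.
apply: (@leq_trans (\sum_(0 <= j0 < n) (j0 - i) * a i j0)); last first.
  exact: (@leq_termN 0 n i (fun i => \sum_(0 <= j0 < n) (j0 - i) * a i j0)).
apply: leq_trans (@leq_termN 0 n j (fun j0 => (j0 - i) * a i j0) ltj).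
case: (boolP [&& i < j, j < r.+2 & ~~ ((i == r) && (j == r.+1))]) => [/andP[ij _]|h].
  by rewrite leq_pmull // subn_gt0.
by rewrite /a aA_zero.
Qed.

Definition condA r (i j : nat) := [&& i < j, j < r.+2 & ~~ ((i == r) && (j == r.+1))].

Lemma aA_eq r (m : {ffun LabA r -> nat}) (F : nat -> nat -> nat) i j :
  (forall t, m t = F (val t).1 (val t).2) -> aA m i j = if condA r i j then F i j else 0.
Proof.
move=> hF; case: ifP => h; last by rewrite aA_zero //; move: h; rewrite /condA => ->.
case/and3P: h => ij jn nh.
have iN : i < r.+2 by apply: ltn_trans jn.
rewrite /aA; case: insubP => [i' _ ei|]; last by rewrite iN.
case: insubP => [j' _ ej|]; last by rewrite jn.
rewrite insubT /=; first by rewrite /labA /= ei ej ij nh.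
by move=> Hl; rewrite hF /= ei ej.
Qed.

Lemma bB_zero r (m : {ffun LabB r -> nat}) i j b : ~~ (i < j < r) -> bB m i j b = 0.
Proof.
move=> h; rewrite /bB; case: insubP => [i' _ ei|//]; case: insubP => [j' jn ej|//].
rewrite insubF //; apply/negbTE; rewrite /labB /= ei ej; apply: contra h => ->.
by rewrite -ej ltn_ord.
Qed.

Lemma bB_eq r (m : {ffun LabB r -> nat}) (F : nat -> nat -> bool -> nat) i j b :
  (forall t, m (inl t) = F (val t).1.1 (val t).1.2 (val t).2) ->
  bB m i j b = if i < j < r then F i j b else 0.
Proof.
move=> hF; case: ifP => h; last by rewrite bB_zero // h.
case/andP: h => ij jn.
have iN : i < r by apply: ltn_trans jn.
rewrite /bB; case: insubP => [i' _ ei|]; last by rewrite iN.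
case: insubP => [j' _ ej|]; last by rewrite jn.
rewrite insubT /=; first by rewrite /labB /= ei ej ij.
by move=> Hl; rewrite hF /= ei ej.
Qed.

Lemma sB_eq r (m : {ffun LabB r -> nat}) (G : nat -> nat) k :
  (forall k' : 'I_r, m (inr k') = G k') -> sB m k = if k < r then G k else 0.
Proof.
move=> hG; rewrite /sB; case: insubP => [k' kr ek|/negbTE ->//].
by rewrite hG ek kr.
Qed.

Section Maps.
Variable r : nat.

Definition XB (m : {ffun LabB r -> nat}) i := (0 < sB m i) * (\sum_(0 <= k < i) sB m k == 0).
Definition YB (m : {ffun LabB r -> nat}) i := (0 < sB m i) * (\sum_(0 <= k < i.+1) sB m k == 2).
Definition xB (m : {ffun LabB r -> nat}) i := XB m i + \sum_(0 <= a < r) bB m a i true.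
Definition yB (m : {ffun LabB r -> nat}) i := YB m i + \sum_(0 <= b < r) bB m i b true.

Definition FA (m : {ffun LabB r -> nat}) i j :=
  if j < r then bB m i j false else if j == r then xB m i else yB m i.

Definition fmap (m : {ffun LabB r -> nat}) : {ffun LabA r -> nat} :=
  [ffun t : LabA r => FA m (nat_of_ord (val t).1) (nat_of_ord (val t).2)].

Definition xA (m : {ffun LabA r -> nat}) i := aA m i r.
Definition yA (m : {ffun LabA r -> nat}) i := aA m i r.+1.

Definition GB (m : {ffun LabA r -> nat}) i j (b : bool) :=
  if b then yA m i * xA m j else aA m i j.
Definition GS (m : {ffun LabA r -> nat}) k :=
  xA m k * \sum_(k <= j < r) yA m j + yA m k * \sum_(0 <= j < k.+1) xA m j.

Definition gmap (m : {ffun LabA r -> nat}) : {ffun LabB r -> nat} :=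
  [ffun t : LabB r => match t with
   | inl q => GB m (nat_of_ord (val q).1.1) (nat_of_ord (val q).1.2) (val q).2
   | inr k => GS m (nat_of_ord k) end].

Lemma aA_f m i j : aA (fmap m) i j = if condA r i j then FA m i j else 0.
Proof. by apply: aA_eq => t; rewrite ffunE. Qed.

Lemma bB_g m i j b : bB (gmap m) i j b = if i < j < r then GB m i j b else 0.
Proof. by apply: bB_eq => t; rewrite ffunE. Qed.

Lemma sB_g m k : sB (gmap m) k = if k < r then GS m k else 0.
Proof. by apply: sB_eq => k'; rewrite ffunE. Qed.

End Maps.

Lemma split2 r (F : nat -> nat) :
  \sum_(0 <= j < r.+2) F j = \sum_(0 <= j < r) F j + F r + F r.+1.
Proof. by rewrite !big_nat_recr. Qed.

Section Props.
Variable r : nat.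
Hypothesis hr : 2 <= r.

Definition PB (m : {ffun LabB r -> nat}) := \sum_(0 <= i < r) \sum_(0 <= j < r) bB m i j true.
Definition SB (m : {ffun LabB r -> nat}) := \sum_(0 <= k < r) sB m k.

Lemma structB (m : {ffun LabB r -> nat}) : solBN m -> 2 * PB m + SB m = 2.
Proof.
move=> hs.
have E : \sum_(0 <= c < r) (\sum_(0 <= j < r) bB m c j false + \sum_(0 <= j < r) bB m c j true
  + \sum_(0 <= i < r) bB m i c true + sB m c) =
  \sum_(0 <= c < r) ((c == 0) + (c == 1) + \sum_(0 <= i < r) bB m i c false).
  by apply: eq_big_nat => c /andP[_ cr]; rewrite hs.
rewrite !big_split /= !sum_ind // in E.
rewrite [X in _ + X + _ = _](exchange_big_nat) /= in E.
rewrite [X in _ = _ + X](exchange_big_nat) /= in E.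
rewrite /PB /SB. move: E. lia.
Qed.

Lemma XY_eq (m : {ffun LabB r -> nat}) c : SB m <= 2 -> SB m != 1 -> c < r -> XB m c + YB m c = sB m c.
Proof.
rewrite /SB /XB /YB => h1 h2 cr.
rewrite (big_cat_nat (n := c)) //= in h1 h2; last exact: ltnW.
rewrite (big_ltn (m := c)) //= in h1 h2.
rewrite big_nat_recr //=.
move: h1 h2; move: (\sum_(0 <= k < c) sB m k) (\sum_(c.+1 <= k < r) sB m k) (sB m c) => L R s.
lia.
Qed.

Lemma sum_xB (m : {ffun LabB r -> nat}) : \sum_(0 <= i < r) xB m i = \sum_(0 <= i < r) XB m i + PB m.
Proof.
rewrite /xB big_split /=; congr (_ + _); rewrite /PB exchange_big_nat //.
Qed.

Lemma sum_yB (m : {ffun LabB r -> nat}) : \sum_(0 <= i < r) yB m i = \sum_(0 <= i < r) YB m i + PB m.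
Proof. by rewrite /yB big_split. Qed.

Lemma fA_lt (m : {ffun LabB r -> nat}) i j : j < r -> aA (fmap m) i j = bB m i j false.
Proof.
move=> jr; rewrite aA_f /condA /FA jr; case: ifP => // /negbT h.
rewrite bB_zero //; apply: contra h => /andP[ij _]; rewrite ij /=; apply/andP; split; lia.
Qed.

Lemma fA_r (m : {ffun LabB r -> nat}) i : i < r -> aA (fmap m) i r = xB m i.
Proof.
move=> ir; rewrite aA_f /condA /FA ltnn eqxx ir /=.
by rewrite ifT //; lia.
Qed.

Lemma fA_r1 (m : {ffun LabB r -> nat}) i : i < r -> aA (fmap m) i r.+1 = yB m i.
Proof.
move=> ir; rewrite aA_f /condA /FA.
have -> : (i < r.+1) = true by lia.
have -> : (i == r) = false by lia.
have -> : (r.+1 < r) = false by lia.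
have -> : (r.+1 == r) = false by lia.
by rewrite ltnSn.
Qed.

Lemma fA_from_r (m : {ffun LabB r -> nat}) j : aA (fmap m) r j = 0.
Proof.
rewrite aA_f /condA; case: ifP => // /and3P[h1 h2 /negP h3]; exfalso; apply: h3.
apply/andP; split => //; apply/eqP; lia.
Qed.

Lemma fA_from_r1 (m : {ffun LabB r -> nat}) j : aA (fmap m) r.+1 j = 0.
Proof. rewrite aA_f /condA; case: ifP => // /and3P[h1 h2 _]; lia. Qed.

Lemma F1 (m : {ffun LabB r -> nat}) : solBN m -> solAN (fmap m).
Proof.
move=> hs; have st := structB hs.
have SX : \sum_(0 <= i < r) XB m i = (0 < SB m) by rewrite /XB seqX.
have SY : \sum_(0 <= i < r) YB m i = (SB m == 2) by rewrite /YB seqY //; rewrite -/(SB m); lia.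
move=> c cn.
have [cr|cr] := ltnP c r.
- rewrite !split2.
  rewrite (eq_big_nat _ _ (fun j hj => fA_lt m c (proj2 (andP hj)))).
  rewrite (eq_big_nat _ _ (fun i hi => fA_lt m i cr)).
  rewrite fA_r // fA_r1 // fA_from_r fA_from_r1.
  have := hs c cr.
  rewrite /xB /yB -(XY_eq (m:=m) (c:=c)) //; try lia.
- have Z : \sum_(0 <= j < r) aA (fmap m) c j = 0.
    rewrite (eq_big_nat _ _ (fun j hj => fA_lt m c (proj2 (andP hj)))).
    rewrite big1_seq // => j; rewrite mem_index_iota => /andP[_ jr].
    rewrite bB_zero //; lia.
  rewrite !split2 Z.
  have [->|cr1] := eqVneq c r.
    rewrite fA_from_r !fA_from_r (eq_big_nat _ _ (fun i hi => fA_r m (proj2 (andP hi)))).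
    rewrite fA_from_r1 sum_xB SX; move: st; lia.
  have -> : c = r.+1 by lia.
  rewrite !fA_from_r1 (eq_big_nat _ _ (fun i hi => fA_r1 m (proj2 (andP hi)))).
  rewrite fA_from_r sum_yB SY; move: st; lia.
Qed.

Lemma sum_if_gt c (F : nat -> nat) : c < r ->
  \sum_(0 <= j < r) (if c < j < r then F j else 0) = \sum_(c.+1 <= j < r) F j.
Proof.
move=> cr; rewrite (big_cat_nat (n := c.+1)) //= big1_seq ?add0n.
  by apply: eq_big_nat => j /andP[h1 h2]; rewrite h1 h2.
by move=> j; rewrite mem_index_iota => /andP[_ h]; rewrite ifF //; lia.
Qed.

Lemma sum_if_lt c (F : nat -> nat) : c < r ->
  \sum_(0 <= i < r) (if i < c < r then F i else 0) = \sum_(0 <= i < c) F i.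
Proof.
move=> cr; rewrite (big_cat_nat (n := c)) //; last by lia.
have -> : \sum_(c <= i < r) (if i < c < r then F i else 0) = 0.
  apply: big1_seq => j; rewrite mem_index_iota => /and3P[_ h _]; rewrite ifF //; lia.
by rewrite Monoid.mulm1; apply: eq_big_nat => j /andP[h1 h2]; rewrite h2 cr.
Qed.

Lemma aA_from_r (m : {ffun LabA r -> nat}) j : aA m r j = 0.
Proof. apply: aA_zero; apply/negP => /and3P[h1 h2 /negP h3]; apply: h3; apply/andP; split => //; apply/eqP; lia. Qed.

Lemma aA_from_r1 (m : {ffun LabA r -> nat}) j : aA m r.+1 j = 0.
Proof. apply: aA_zero; apply/negP => /and3P[h1 h2 _]; lia. Qed.

Lemma structA (m : {ffun LabA r -> nat}) : solAN m ->
  \sum_(0 <= i < r) xA m i = 1 /\ \sum_(0 <= i < r) yA m i = 1.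
Proof.
move=> hs; split.
- have := hs r (ltnW (ltnSn _)); rewrite !split2 !aA_from_r aA_from_r1.
  rewrite [X in X + _ + _ + _ + _ = _]big1 => [|j _]; last exact: aA_from_r.
  rewrite /xA; lia.
- have := hs r.+1 (ltnSn _); rewrite !split2 !aA_from_r1 aA_from_r.
  rewrite [X in X + _ + _ + _ + _ = _]big1 => [|j _]; last exact: aA_from_r1.
  rewrite /yA; lia.
Qed.

Lemma gB_false (m : {ffun LabA r -> nat}) i j : j < r -> bB (gmap m) i j false = aA m i j.
Proof.
move=> jr; rewrite bB_g jr andbT /GB; case: ifP => // /negbT h.
by rewrite aA_zero //; apply: contra h => /and3P[].
Qed.

Lemma gtrue_row (m : {ffun LabA r -> nat}) c : c < r ->
  \sum_(0 <= j < r) bB (gmap m) c j true = yA m c * \sum_(c.+1 <= j < r) xA m j.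
Proof.
move=> cr; rewrite big_distrr /= -(sum_if_gt (fun j => yA m c * xA m j) cr); apply: eq_bigr => j _; by rewrite bB_g.
Qed.

Lemma gtrue_col (m : {ffun LabA r -> nat}) c : c < r ->
  \sum_(0 <= i < r) bB (gmap m) i c true = (\sum_(0 <= i < c) yA m i) * xA m c.
Proof.
move=> cr; rewrite big_distrl /= -(sum_if_lt (fun i => yA m i * xA m c) cr); apply: eq_bigr => j _; by rewrite bB_g.
Qed.

Lemma F2 (m : {ffun LabA r -> nat}) : solAN m -> solBN (gmap m).
Proof.
move=> hs; have [sx sy] := structA hs.
move=> c cr.
rewrite (eq_big_nat _ _ (fun j hj => gB_false m c (proj2 (andP hj)))).
rewrite (eq_big_nat _ _ (fun i hi => gB_false m i cr)).
rewrite gtrue_row // gtrue_col // sB_g cr /GS.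
have := hs c (ltn_trans cr (ltnW (ltnSn _))).
rewrite !split2 aA_from_r aA_from_r1 -/(xA m c) -/(yA m c).
have e1 := sx; rewrite (big_cat_nat (n := c.+1)) //= in e1.
have e2 := sy; rewrite (big_cat_nat (n := c)) //= in e2; last by lia.
move: e1 e2.
move: (\sum_(0 <= j < c.+1) xA m j) (\sum_(c.+1 <= j < r) xA m j)
  (\sum_(0 <= j < c) yA m j) (\sum_(c <= j < r) yA m j) => A B C D.
nia.
Qed.

Lemma sB_zero (m : {ffun LabB r -> nat}) k : r <= k -> sB m k = 0.
Proof. by move=> h; rewrite /sB insubF //; apply/negbTE; rewrite -leqNgt. Qed.

Lemma caseB (m : {ffun LabB r -> nat}) : solBN m ->
  (SB m = 2 /\ forall i j, bB m i j true = 0) \/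
  ((forall k, sB m k = 0) /\ exists a0 b0, a0 < b0 < r /\
     forall i j, bB m i j true = (i == a0) * (j == b0)).
Proof.
move=> hs; have st := structB hs.
have [P0|P1] : PB m = 0 \/ PB m = 1 by lia.
- left; split; first by lia.
  move=> i j; case: (boolP (i < j < r)) => [/andP[ij jr]|h]; last by rewrite bB_zero.
  have ir : i < r by lia.
  have := @sum0N _ _ _ P0 i; rewrite ir => /(_ isT) h.
  exact: (@sum0N _ _ _ h j).
- right; split.
    move=> k; case: (ltnP k r) => kr; last exact: sB_zero.
    have S0 : SB m = 0 by lia.
    exact: (@sum0N _ _ _ S0 k).
  case: (sum1N _ _ P1) => a0 a0r ha.
  have := ha a0 a0r; rewrite eqxx => /(sum1N _ _) [b0 b0r hb].
  have hp : forall i j, bB m i j true = (i == a0) * (j == b0).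
    move=> i j; case: (ltnP i r) => ir; last first.
      rewrite bB_zero; last by apply/negP => /andP[h1 h2]; lia.
      by have -> : (i == a0) = false by lia.
    case: (ltnP j r) => jr; last first.
      rewrite bB_zero; last by apply/negP => /andP[h1 h2]; lia.
      nia.
    case: (eqVneq i a0) => [->|ia]; first by rewrite hb //; lia.
    rewrite mul0n; have := ha i ir; rewrite (negbTE ia) => h0.
    exact: (@sum0N _ _ _ h0 j).
  exists a0, b0; split => //.
  have : bB m a0 b0 true != 0 by rewrite hp !eqxx.
  apply: contraR => h; rewrite bB_zero //; apply: contra h => /andP[-> _].
Qed.

Lemma pB (m : {ffun LabB r -> nat}) i j : solBN m -> i < j < r ->
  yB m i * xB m j = bB m i j true.
Proof.
move=> hs /andP[ij jr]; rewrite /xB /yB.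
case: (caseB hs) => [[S2 hp]|[hs0 [a0 [b0 [ab hp]]]]].
- rewrite hp !big1 // ?addn0 /XB /YB.
  have : sB m i <= \sum_(0 <= k < j) sB m k by apply: (@leq_termN 0 j i (sB m)); lia.
  rewrite big_nat_recr //=.
  move: (sB m i) (sB m j) (\sum_(0 <= k < j) sB m k) (\sum_(0 <= k < i) sB m k) => x y L M.
  nia.
- rewrite /XB /YB !hs0 !mul0n !add0n.
  under eq_bigr => b _ do rewrite hp.
  under [X in _ * X]eq_bigr => a _ do rewrite hp.
  rewrite sum_deltaR // sum_delta // hp.
  nia.
Qed.

Lemma sBk (m : {ffun LabB r -> nat}) k : solBN m -> k < r ->
  xB m k * \sum_(k <= j < r) yB m j + yB m k * \sum_(0 <= j < k.+1) xB m j = sB m k.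
Proof.
move=> hs kr.
case: (caseB hs) => [[S2 hp]|[hs0 [a0 [b0 [ab hp]]]]].
- have ex : forall j, xB m j = XB m j by move=> j; rewrite /xB big1 ?addn0.
  have ey : forall j, yB m j = YB m j by move=> j; rewrite /yB big1 ?addn0.
  rewrite ex ey (eq_bigr _ (fun j _ => ey j)) (eq_bigr _ (fun j _ => ex j)).
  have sp := S2; rewrite /SB (big_cat_nat (n := k)) //= in sp; last by lia.
  rewrite (big_ltn (m := k)) //= in sp.
  have tot : \sum_(0 <= j < r) YB m j = 1 by rewrite /YB seqY -/(SB m) S2.
  rewrite (big_cat_nat (n := k)) //= in tot; last by lia.
  rewrite {1}/YB seqY in tot; last by lia.
  rewrite /XB seqX big_nat_recr //= /YB big_nat_recr //=.
  move: tot sp; rewrite -/(YB m).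
  move: (\sum_(k <= j < r) YB m j) (\sum_(0 <= k0 < k) sB m k0) (\sum_(k.+1 <= i < r) sB m i) (sB m k) => Y L R x.
  nia.
- have ex : forall j, xB m j = (j == b0).
    move=> j; rewrite /xB /XB hs0 mul0n add0n.
    under eq_bigr => a _ do rewrite hp.
    rewrite sum_delta //; lia.
  have ey : forall j, yB m j = (j == a0).
    move=> j; rewrite /yB /YB hs0 mul0n add0n.
    under eq_bigr => b _ do rewrite hp.
    rewrite sum_deltaR //; lia.
  rewrite ex ey (eq_bigr _ (fun j _ => ey j)) (eq_bigr _ (fun j _ => ex j)) hs0.
  rewrite !sum_ind //; first nia; lia.
Qed.

Lemma F3 (m : {ffun LabB r -> nat}) : solBN m -> gmap (fmap m) = m.
Proof.
move=> hs; apply/ffunP => -[q|k]; rewrite ffunE.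
- rewrite -bB_val /GB.
  have ij : (val q).1.1 < (val q).1.2 := valP q.
  have jr : nat_of_ord (val q).1.2 < r := ltn_ord _.
  have ir : nat_of_ord (val q).1.1 < r by apply: ltn_trans jr.
  case: (val q).2.
    by rewrite /xA /yA fA_r // fA_r1 // pB // ij jr.
  by rewrite fA_lt.
- rewrite -sB_val /GS /xA /yA.
  have kr : nat_of_ord k < r := ltn_ord _.
  rewrite fA_r // fA_r1 //.
  rewrite (eq_big_nat _ _ (fun j hj => fA_r1 m (proj2 (andP hj)))).
  rewrite (eq_big_nat _ _ (fun j (hj : 0 <= j < k.+1) => fA_r m (leq_trans (proj2 (andP hj)) kr))).
  exact: sBk.
Qed.

Lemma F4 (m : {ffun LabA r -> nat}) : solAN m -> fmap (gmap m) = m.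
Proof.
move=> hs; have [sx sy] := structA hs.
case: (sum1N _ _ sx) => al alr hx.
case: (sum1N _ _ sy) => be ber hy.
set g := gmap m.
have hbt : forall a i, bB g a i true = (a == be) * ((a < i < r) * (i == al)).
  move=> a i; rewrite bB_g /GB; case: ifP => [/andP[ai ir]|/negbT h].
    have ar : a < r by lia. by rewrite hx // hy // mul1n.
  by rewrite /= muln0.
have hs' : forall k, sB g k = (k == al) * ((k < r) * (al <= be)) + (k == be) * ((k < r) * (al <= be)).
  move=> k; rewrite sB_g; case: ifP => kr; last by nia.
  rewrite /GS hx // hy //.
  rewrite (eq_big_nat _ _ (fun j hj => hy j (proj2 (andP hj)))).
  rewrite (eq_big_nat _ _ (fun j (hj : 0 <= j < k.+1) => hx j (leq_trans (proj2 (andP hj)) kr))).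
  rewrite !sum_ind //; last exact: ltnW.
  nia.
have sumS : forall N, \sum_(0 <= k < N) sB g k =
    (0 <= al < N) * ((al < r) * (al <= be)) + (0 <= be < N) * ((be < r) * (al <= be)).
  move=> N; rewrite (eq_bigr _ (fun k _ => hs' k)) big_split /= !sum_delta //.
apply/ffunP => t; rewrite ffunE -aA_val /FA.
have := valP t; rewrite /labA => /andP[ij nrr].
have jn : nat_of_ord (val t).2 < r.+2 := ltn_ord _.
move: ij nrr jn; move: (nat_of_ord (val t).1) (nat_of_ord (val t).2) => i j ij nrr jn.
case: (ltnP j r) => jr; first by rewrite gB_false.
case: (eqVneq j r) => [ejr|njr].
- subst j; rewrite /xB /XB hs' sumS.
  rewrite (eq_bigr (fun a => (a == be) * ((a < i < r) * (i == al)))); last by move=> a _; rewrite hbt.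
  rewrite sum_delta // -/(xA m i) hx //.
  nia.
- have ej : j = r.+1 by lia.
  subst j; have ir : i < r by lia.
  rewrite /yB /YB hs' sumS.
  rewrite (eq_bigr (fun b => ((i == be) * (i < b < r)) * (b == al))); last by move=> b _; rewrite hbt; nia.
  rewrite sum_deltaR // -/(yA m i) hy //.
  nia.
Qed.

End Props.

Local Open Scope ring_scope.

Theorem mainTheorem13 (r : nat) (hr : (2 <= r)%N) :
  exists N : nat,
    kostant (@rootB r) (evec r 0 + evec r 1) N /\
    kostant (@rootA r)
      (evec r.+2 0 + evec r.+2 1 - evec r.+2 r - evec r.+2 r.+1) N.
Proof.
have [N KA] : exists N, kostant (@rootA r)
    (evec r.+2 0 + evec r.+2 1 - evec r.+2 r - evec r.+2 r.+1) N.
  apply: (@kostant_bounded _ _ _ _ (r.+2).*2) => m h t.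
  exact: (boundA (proj1 (solA_iff m) h) t).
exists N; split => //.
apply: (@kostant_transfer _ _ _ _ _ _ _ _ N (@gmap r) (@fmap r)) KA.
- by move=> m /solA_iff h; apply/solB_iff; apply: F2.
- by move=> m /solB_iff h; apply/solA_iff; apply: F1.
- by move=> m /solA_iff h; apply: F4.
- by move=> m /solB_iff h; apply: F3.
Qed.
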